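(* Consider the BSSC with parameters $(\alpha,\beta)\in[0,1]^2$, $\alpha+\beta\neq1$, used with feedback and without transmission cost. Let $$\mu=\frac{H(\beta)-H(\alpha)}{1-\alpha-\beta},\qquad\lambda=\frac{1}{1+2^{\mu}},\qquad\nu=\frac{1-(1-\beta)(1+2^{\mu})}{(\alpha+\beta-1)(1+2^{\mu})}.$$ (a) For every $n\ge0$ and every initial state $b_{-1}\in\{0,1\}$, the supremum in $C^{FB,BSSC}_{A^n\to B^n}$ is attained by the time-invariant input distribution $\pi_i(a_i|a^{i-1},b^{i-1})=\pi^{TI}(a_i|b_{i-1})$ for all $i=0,\dots,n$, where $\pi^{TI}(a|b)=\nu$ if $a=b$ and $1-\nu$ if $a\ne b$; the corresponding channel output transition is $\mathbf P(b_i|b^{i-1})=\mathbf P^{TI}(b_i|b_{i-1})$ with $\mathbf P^{TI}(b'|b)=\lambda$ if $b'=b$ and $1-\lambda$ if $b'\ne b$. Moreover $$C^{FB,BSSC}_{A^n\to B^n}=(n+1)\max_{\pi(\cdot|b_{-1})}I(A_0;B_0|B_{-1}=b_{-1})=(n+1)\big[H(\lambda)-\nu H(\alpha)-(1-\nu)H(\beta)\big]\quad\forall b_{-1}\in\{0,1\}.$$ (b) The feedback capacity $C^{FB,BSSC}_{A^\infty\to B^\infty}=\lim_{n\to\infty}\frac1{n+1}C^{FB,BSSC}_{A^n\to B^n}$ equals $H(\lambda)-\nu H(\alpha)-(1-\nu)H(\beta)=\max_{\pi(\cdot|b_{-1})}I(A_0;B_0|B_{-1}=b_{-1})$ for every $b_{-1}$,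 and is independent of the initial state.
   Context: The Binary State Symmetric Channel BSSC$(\alpha,\beta)$ has $\mathbb A=\mathbb B=\{0,1\}$ and time-invariant transition probabilities $\mathbf P(b_i|a_i,b_{i-1})$ given by $\mathbf P(b_i=a_i|a_i,b_{i-1})=\alpha$ if $a_i=b_{i-1}$ and $\mathbf P(b_i=a_i|a_i,b_{i-1})=\beta$ if $a_i\ne b_{i-1}$ (i.e. $\mathbf P(0|0,0)=\alpha$, $\mathbf P(0|0,1)=\beta$, $\mathbf P(0|1,0)=1-\beta$, $\mathbf P(0|1,1)=1-\alpha$, where the conditioning is on $(a_i,b_{i-1})$). $H(x)=-x\log_2x-(1-x)\log_2(1-x)$ is the binary entropy. With the initial state $B_{-1}=b_{-1}$ fixed and known to encoder and decoder, $C^{FB,BSSC}_{A^n\to B^n}=\sup\sum_{i=0}^nI(A^i;B_i|B^{i-1})$, the supremum over all feedback input distributions $\{\mathbf P(a_i|a^{i-1},b^{i-1})\}_{i=0}^n$. $I(A_0;B_0|B_{-1}=b_{-1})$ is evaluated with $A_0\sim\pi(\cdot|b_{-1})$ and $B_0\sim\mathbf P(\cdot|A_0,b_{-1})$. *)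

(* Defs.v *)
From Stdlib Require Import Reals Lra List.
Import ListNotations.
Open Scope R_scope.

Definition log2 (x : R) : R := ln x / ln 2.
Definition plogp (x : R) : R := if Req_EM_T x 0 then 0 else x * log2 x.
Definition Hb (x : R) : R := - plogp x - plogp (1 - x).

Fixpoint bseqs (k : nat) : list (list bool) :=
  match k with
  | O => [ [] ]
  | S k => flat_map (fun s => [s ++ [false]; s ++ [true]]) (bseqs k)
  end.

Definition sumL {T : Type} (f : T -> R) (l : list T) : R :=
  fold_right (fun s acc => f s + acc) 0 l.

(** BSSC(alpha,beta): bssc al be b a bprev = P(B_i = b | A_i = a, B_{i-1} = bprev) *)
Definition bssc (al be : R) (b a bprev : bool) : R :=
  if Bool.eqb a bprev
  then (if Bool.eqb b a then al else 1 - al)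
  else (if Bool.eqb b a then be else 1 - be).

(** feedback input distribution: pol i as bs a = P(A_i = a | A^{i-1} = as, B^{i-1} = bs)
    (the initial state b_{-1} is fixed and known; the policy may be chosen for it) *)
Definition policy := nat -> list bool -> list bool -> bool -> R.

Definition valid_policy (pol : policy) : Prop :=
  forall i as_ bs, (forall a, 0 <= pol i as_ bs a) /\ pol i as_ bs true + pol i as_ bs false = 1.

(** state B_{j-1} given the output history bs, with B_{-1} = bm1 *)
Definition prev_state (bm1 : bool) (j : nat) (bs : list bool) : bool :=
  match j with O => bm1 | S j' => nth j' bs false end.

(** joint probability P(A^{m-1} = as, B^{m-1} = bs | B_{-1} = bm1) *)
Fixpoint joint (al be : R) (pol : policy) (bm1 : bool) (m : nat)
    (as_ bs : list bool) : R :=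
  match m with
  | O => 1
  | S j => joint al be pol bm1 j as_ bs *
           (pol j (firstn j as_) (firstn j bs) (nth j as_ false) *
            bssc al be (nth j bs false) (nth j as_ false) (prev_state bm1 j bs))
  end.

(** conditional mutual information I(A^i ; B_i | B^{i-1}) (given B_{-1} = bm1) *)
Definition cmi (al be : R) (pol : policy) (bm1 : bool) (i : nat) : R :=
  let m := S i in
  sumL (fun as_ => sumL (fun bs =>
    let pab := joint al be pol bm1 m as_ bs in
    let pbprev := sumL (fun as' => joint al be pol bm1 i as' (firstn i bs)) (bseqs i) in
    let pabprev := sumL (fun b => joint al be pol bm1 m as_ (firstn i bs ++ [b])) [false; true] in
    let pb := sumL (fun as' => joint al be pol bm1 m as' bs) (bseqs m) in
    if Req_EM_T pab 0 then 0
    else pab * log2 (pab * pbprev / (pabprev * pb))) (bseqs m)) (bseqs m).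

Definition dirinfo (al be : R) (pol : policy) (bm1 : bool) (n : nat) : R :=
  sum_f_R0 (fun i => cmi al be pol bm1 i) n.

(** set of achievable values; C^{FB}_{A^n -> B^n} is its supremum *)
Definition DI_set (al be : R) (bm1 : bool) (n : nat) (x : R) : Prop :=
  exists pol, valid_policy pol /\ x = dirinfo al be pol bm1 n.

Definition pout (al be : R) (pol : policy) (bm1 : bool) (m : nat) (bs : list bool) : R :=
  sumL (fun as' => joint al be pol bm1 m as' bs) (bseqs m).

(** I(A_0 ; B_0 | B_{-1} = bm1) for input distribution q = pi(.|bm1) *)
Definition mi0 (al be : R) (bm1 : bool) (q : bool -> R) : R :=
  sumL (fun a => sumL (fun b =>
    let pab := q a * bssc al be b a bm1 in
    let pb := sumL (fun a' => q a' * bssc al be b a' bm1) [false; true] in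
    if Req_EM_T pab 0 then 0 else pab * log2 (pab / (q a * pb))) [false; true]) [false; true].

Definition valid_dist (q : bool -> R) : Prop :=
  (forall a, 0 <= q a) /\ q true + q false = 1.

Definition mu_p (al be : R) : R := (Hb be - Hb al) / (1 - al - be).
Definition lambda_p (al be : R) : R := 1 / (1 + Rpower 2 (mu_p al be)).
Definition nu_p (al be : R) : R :=
  (1 - (1 - be) * (1 + Rpower 2 (mu_p al be))) /
  ((al + be - 1) * (1 + Rpower 2 (mu_p al be))).

Definition piTI (al be : R) (bm1 : bool) : policy :=
  fun i _ bs a => if Bool.eqb a (prev_state bm1 i bs) then nu_p al be else 1 - nu_p al be.

Definition PTI (al be : R) (b' b : bool) : R :=
  if Bool.eqb b' b then lambda_p al be else 1 - lambda_p al be.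

Definition cap_value (al be : R) : R :=
  Hb (lambda_p al be) - nu_p al be * Hb al - (1 - nu_p al be) * Hb be.

(* Main.v *)
Require Import Defs.
From Stdlib Require Import Reals List.
From Stdlib Require Import Lra Lia.
Import ListNotations.
Open Scope R_scope.

Lemma sumL_nil {T} (f : T -> R) : sumL f [] = 0.
Proof. reflexivity. Qed.
Lemma sumL_cons {T} (f : T -> R) x l : sumL f (x :: l) = f x + sumL f l.
Proof. reflexivity. Qed.
Lemma sumL_two {T} (f : T -> R) x y : sumL f [x; y] = f x + f y.
Proof. cbn. ring. Qed.
Lemma sumL_plus {T} (f g : T -> R) l : sumL (fun x => f x + g x) l = sumL f l + sumL g l.
Proof. induction l; simpl; [ring| rewrite IHl; ring]. Qed.
Lemma sumL_scal {T} (c : R) (f : T -> R) l : sumL (fun x => c * f x) l = c * sumL f l.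
Proof. induction l; simpl; [ring| rewrite IHl; ring]. Qed.
Lemma sumL_ext_in {T} (f g : T -> R) l : (forall x, In x l -> f x = g x) -> sumL f l = sumL g l.
Proof. induction l; simpl; intros H; [reflexivity|]. rewrite H by auto. rewrite IHl; auto. Qed.
Lemma sumL_le_in {T} (f g : T -> R) l : (forall x, In x l -> f x <= g x) -> sumL f l <= sumL g l.
Proof. induction l; simpl; intros H; [lra|]. specialize (IHl (fun x h => H x (or_intror h))).
  specialize (H a (or_introl eq_refl)). lra. Qed.
Lemma sumL_nonneg {T} (f : T -> R) l : (forall x, In x l -> 0 <= f x) -> 0 <= sumL f l.
Proof. induction l; simpl; intros H; [lra|]. specialize (IHl (fun x h => H x (or_intror h))).
  specialize (H a (or_introl eq_refl)). lra. Qed.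
Lemma sumL_zero {T} l : sumL (fun _ : T => 0) l = 0.
Proof. induction l; simpl; auto. rewrite IHl; ring. Qed.
Lemma sumL_ge_term {T} (f : T -> R) l x : (forall y, In y l -> 0 <= f y) -> In x l -> f x <= sumL f l.
Proof. induction l; simpl; intros H Hx; [contradiction|]. destruct Hx as [<-|Hx].
  - assert (0 <= sumL f l) by (apply sumL_nonneg; auto). lra.
  - assert (f x <= sumL f l) by (apply IHl; auto). specialize (H a (or_introl eq_refl)). lra. Qed.
Lemma sumL_swap {T U} (f : T -> U -> R) l1 l2 :
  sumL (fun x => sumL (fun y => f x y) l2) l1 = sumL (fun y => sumL (fun x => f x y) l1) l2.
Proof. induction l1; simpl. - rewrite sumL_zero; auto.
  - rewrite IHl1. rewrite <- sumL_plus. reflexivity. Qed.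
Lemma sumL_flat {T U} (f : U -> R) (g : T -> list U) l :
  sumL f (flat_map g l) = sumL (fun x => sumL f (g x)) l.
Proof. induction l; simpl; auto. unfold sumL at 1. rewrite fold_right_app. fold (sumL f (flat_map g l)).
  rewrite IHl. generalize (sumL (fun x => sumL f (g x)) l). intros c. unfold sumL. induction (g a) as [|y l' IH]; simpl; [ring|]. rewrite IH. ring. Qed.
Lemma sumL_bseqsS (f : list bool -> R) i :
  sumL f (bseqs (S i)) = sumL (fun s => f (s ++ [false]) + f (s ++ [true])) (bseqs i).
Proof. simpl. rewrite sumL_flat. apply sumL_ext_in. intros; apply sumL_two. Qed.
Lemma bseqs_length i s : In s (bseqs i) -> length s = i.
Proof. revert s; induction i; simpl; intros s H. - destruct H as [<-|[]]; auto.
  - apply in_flat_map in H. destruct H as [x [Hx Hs]]. apply IHi in Hx.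
    simpl in Hs. destruct Hs as [<-|[<-|[]]]; rewrite length_app; simpl; lia. Qed.

Lemma firstn_app_le {T} j (l x : list T) : (j <= length l)%nat -> firstn j (l ++ x) = firstn j l.
Proof. intros H. rewrite firstn_app. replace (j - length l)%nat with 0%nat by lia. simpl. apply app_nil_r. Qed.

Lemma prev_state_app bm1 j (l x : list bool) : (j <= length l)%nat -> prev_state bm1 j (l ++ x) = prev_state bm1 j l.
Proof. intros H. destruct j; simpl; auto. apply app_nth1. lia. Qed.

Lemma joint_app al be pol bm1 j as_ bs xa xb :
  (j <= length as_)%nat -> (j <= length bs)%nat ->
  joint al be pol bm1 j (as_ ++ xa) (bs ++ xb) = joint al be pol bm1 j as_ bs.
Proof. induction j; intros Ha Hb; simpl; auto.
  rewrite IHj by lia. rewrite !firstn_app_le by lia. rewrite !app_nth1 by lia.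
  rewrite prev_state_app by lia. reflexivity. Qed.

Lemma joint_snoc al be pol bm1 i u s a b : length u = i -> length s = i ->
  joint al be pol bm1 (S i) (u ++ [a]) (s ++ [b]) =
  joint al be pol bm1 i u s * (pol i u s a * bssc al be b a (prev_state bm1 i s)).
Proof. intros Hu Hs. simpl. rewrite joint_app by lia.
  rewrite !firstn_app_le by lia. rewrite !firstn_all2 by lia.
  rewrite prev_state_app by lia.
  rewrite !app_nth2 by lia. rewrite Hu, Hs, !Nat.sub_diag. reflexivity. Qed.

Lemma bssc_sum al be a p : bssc al be false a p + bssc al be true a p = 1.
Proof. unfold bssc. destruct a, p; simpl; ring. Qed.
Lemma bssc_nonneg al be b a p : 0 <= al <= 1 -> 0 <= be <= 1 -> 0 <= bssc al be b a p.
Proof. unfold bssc. intros. destruct a, p, b; simpl; lra. Qed.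
Lemma bssc_le1 al be b a p : 0 <= al <= 1 -> 0 <= be <= 1 -> bssc al be b a p <= 1.
Proof. unfold bssc. intros. destruct a, p, b; simpl; lra. Qed.

Lemma pol_le1 pol i u s a : valid_policy pol -> 0 <= pol i u s a <= 1.
Proof. intros H. destruct (H i u s) as [H1 H2]. pose proof (H1 true). pose proof (H1 false).
  destruct a; lra. Qed.

Lemma joint_nonneg al be pol bm1 j u s : 0 <= al <= 1 -> 0 <= be <= 1 -> valid_policy pol ->
  0 <= joint al be pol bm1 j u s.
Proof. intros ? ? Hp. induction j; simpl; [lra|]. apply Rmult_le_pos; auto.
  apply Rmult_le_pos. apply (proj1 (Hp _ _ _)). apply bssc_nonneg; auto. Qed.

Lemma sum_bool (f : bool -> R) : sumL f [false; true] = f false + f true.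
Proof. apply sumL_two. Qed.

Lemma joint_mass al be pol bm1 i : valid_policy pol ->
  sumL (fun u => sumL (fun s => joint al be pol bm1 i u s) (bseqs i)) (bseqs i) = 1.
Proof. intros Hp. induction i. - simpl. ring.
  - rewrite sumL_bseqsS. rewrite <- IHi. apply sumL_ext_in. intros u Hu.
    rewrite !sumL_bseqsS. rewrite <- sumL_plus. apply sumL_ext_in. intros s Hs.
    apply bseqs_length in Hu. apply bseqs_length in Hs.
    rewrite !joint_snoc by auto.
    pose proof (bssc_sum al be false (prev_state bm1 i s)).
    pose proof (bssc_sum al be true (prev_state bm1 i s)).
    destruct (Hp i u s) as [_ H2]. nra. Qed.

Lemma ln2_pos : 0 < ln 2.
Proof. rewrite <- ln_1. apply ln_increasing; lra. Qed.

Lemma ln_le_sub1 y : 0 < y -> ln y <= y - 1.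
Proof. intros H. pose proof (exp_ineq1_le (ln y)). rewrite exp_ln in H0 by auto. lra. Qed.

Lemma gibbs x y : 0 <= x -> 0 <= y -> (x = 0 \/ 0 < y) -> x * ln (y / x) <= y - x.
Proof. intros Hx Hy [H0|Hp]. - subst. lra.
  - destruct (Req_dec x 0) as [->|Hn]; [lra|].
    assert (0 < x) by lra. pose proof (ln_le_sub1 (y/x)).
    assert (0 < y / x) by (apply Rdiv_lt_0_compat; auto). specialize (H0 H1).
    apply Rmult_le_compat_l with (r := x) in H0; [|lra].
    replace (x * (y / x - 1)) with (y - x) in H0 by (field; lra). lra. Qed.

Lemma t_pos al be : 0 < Rpower 2 (mu_p al be).
Proof. unfold Rpower. apply exp_pos. Qed.

Lemma lam_bounds al be : 0 < lambda_p al be < 1.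
Proof. unfold lambda_p. pose proof (t_pos al be). split.
  - apply Rdiv_lt_0_compat; lra.
  - apply (Rmult_lt_reg_r (1 + Rpower 2 (mu_p al be))); [lra|]. field_simplify; lra. Qed.

Lemma log2_diff al be : log2 (lambda_p al be) - log2 (1 - lambda_p al be) = - mu_p al be.
Proof. unfold log2, lambda_p. pose proof (t_pos al be) as Ht. set (t := Rpower 2 (mu_p al be)) in *.
  replace (1 - 1 / (1 + t)) with (t * (1 / (1 + t))) by (field; lra).
  rewrite ln_mult by (auto; apply Rdiv_lt_0_compat; lra).
  unfold t. rewrite ln_Rpower. pose proof ln2_pos. field. lra. Qed.

Lemma lam_nu al be : al + be <> 1 ->
  lambda_p al be = nu_p al be * al + (1 - nu_p al be) * (1 - be).
Proof. intros H. unfold lambda_p, nu_p. pose proof (t_pos al be). field. split; lra. Qed.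

Lemma mu_eq al be : al + be <> 1 -> mu_p al be * (1 - al - be) = Hb be - Hb al.
Proof. intros H. unfold mu_p. field. lra. Qed.

Lemma plogp_nz x : x <> 0 -> plogp x = x * log2 x.
Proof. intros H. unfold plogp. destruct (Req_EM_T x 0); [contradiction|auto]. Qed.

Definition Dterm al be (a p b : bool) : R :=
  let w := bssc al be b a p in
  if Req_EM_T w 0 then 0 else w * (log2 w - log2 (PTI al be b p)).

Lemma Dterm_eq al be a p b : Dterm al be a p b =
  plogp (bssc al be b a p) - bssc al be b a p * log2 (PTI al be b p).
Proof. unfold Dterm, plogp. destruct (Req_EM_T _ 0) as [e|n]. - rewrite e. ring. - ring. Qed.

Lemma cap_alg Ha Hbb X Y mu lam nu al be :
  X - Y = - mu -> mu * (1 - al - be) = Hbb - Ha -> lam = nu * al + (1 - nu) * (1 - be) ->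
  - Ha - al * X - (1 - al) * Y = (- lam * X - (1 - lam) * Y) - nu * Ha - (1 - nu) * Hbb /\
  - Hbb - (1 - be) * X - be * Y = (- lam * X - (1 - lam) * Y) - nu * Ha - (1 - nu) * Hbb.
Proof. intros H1 H2 H3. assert (X = Y - mu) by lra. subst X lam.
  assert (Hbb = Ha + mu * (1 - al - be)) by lra. subst Hbb. split; ring. Qed.

Lemma Dsum al be a p : al + be <> 1 ->
  Dterm al be a p false + Dterm al be a p true = cap_value al be.
Proof. intros Hab. rewrite !Dterm_eq. unfold cap_value.
  pose proof (lam_bounds al be). 
  assert (Hl : Hb (lambda_p al be) = - lambda_p al be * log2 (lambda_p al be) -
     (1 - lambda_p al be) * log2 (1 - lambda_p al be)).
  { unfold Hb. rewrite !plogp_nz by lra. ring. }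
  rewrite Hl.
  destruct (cap_alg (Hb al) (Hb be) (log2 (lambda_p al be)) (log2 (1 - lambda_p al be))
     (mu_p al be) (lambda_p al be) (nu_p al be) al be (log2_diff al be) (mu_eq al be Hab) (lam_nu al be Hab))
    as [E1 E2].
  unfold Hb in *. unfold bssc, PTI. destruct a, p; simpl.
  - rewrite <- E1. replace (1 - (1 - al)) with al by ring. ring.
  - rewrite <- E2. replace (1 - (1 - be)) with be by ring. ring.
  - rewrite <- E2. replace (1 - (1 - be)) with be by ring. ring.
  - rewrite <- E1. replace (1 - (1 - al)) with al by ring. ring.
Qed.

Definition Kf al be pol bm1 i u s a := joint al be pol bm1 i u s * pol i u s a.
Definition wf al be bm1 i s a b := bssc al be b a (prev_state bm1 i s).
Definition Psf al be pol bm1 i s := sumL (fun u => joint al be pol bm1 i u s) (bseqs i).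
Definition Qf al be pol bm1 i s b := sumL (fun u =>
   Kf al be pol bm1 i u s false * wf al be bm1 i s false b +
   Kf al be pol bm1 i u s true * wf al be bm1 i s true b) (bseqs i).
Definition Tn al be pol bm1 i u s a b :=
  let k := Kf al be pol bm1 i u s a in let wv := wf al be bm1 i s a b in
  if Req_EM_T (k * wv) 0 then 0
  else k * wv * log2 (wv * Psf al be pol bm1 i s / Qf al be pol bm1 i s b).

Lemma firstn_snoc i (s : list bool) b : length s = i -> firstn i (s ++ [b]) = s.
Proof. intros H. rewrite firstn_app_le by lia. apply firstn_all2. lia. Qed.

Lemma Kf_nonneg al be pol bm1 i u s a : 0 <= al <= 1 -> 0 <= be <= 1 -> valid_policy pol ->
  0 <= Kf al be pol bm1 i u s a.
Proof. intros. unfold Kf. apply Rmult_le_pos. apply joint_nonneg; auto. apply (proj1 (H1 _ _ _)). Qed.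
Lemma wf_nonneg al be bm1 i s a b : 0 <= al <= 1 -> 0 <= be <= 1 -> 0 <= wf al be bm1 i s a b.
Proof. intros. apply bssc_nonneg; auto. Qed.
Lemma Qf_ge al be pol bm1 i u s a b : 0 <= al <= 1 -> 0 <= be <= 1 -> valid_policy pol ->
  In u (bseqs i) -> Kf al be pol bm1 i u s a * wf al be bm1 i s a b <= Qf al be pol bm1 i s b.
Proof. intros H1 H2 H3 Hu. unfold Qf.
  assert (Hn : forall u a, 0 <= Kf al be pol bm1 i u s a * wf al be bm1 i s a b).
  { intros. apply Rmult_le_pos. apply Kf_nonneg; auto. apply wf_nonneg; auto. }
  eapply Rle_trans; [|apply (sumL_ge_term _ _ u); auto].
  - pose proof (Hn u false). pose proof (Hn u true). destruct a; simpl; lra.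
  - intros y _. pose proof (Hn y false). pose proof (Hn y true). lra. Qed.

Lemma cmi_Tn al be pol bm1 i : 0 <= al <= 1 -> 0 <= be <= 1 -> valid_policy pol -> 
  cmi al be pol bm1 i = sumL (fun u =>
     sumL (fun s => Tn al be pol bm1 i u s false false + Tn al be pol bm1 i u s false true) (bseqs i) +
     sumL (fun s => Tn al be pol bm1 i u s true false + Tn al be pol bm1 i u s true true) (bseqs i)) (bseqs i).
Proof. intros Hal Hbe Hp. unfold cmi. rewrite sumL_bseqsS. apply sumL_ext_in. intros u Hu.
  pose proof Hu as Hu'. apply bseqs_length in Hu.
  assert (HT : forall a, sumL (fun bs =>
    let pab := joint al be pol bm1 (S i) (u ++ [a]) bs in
    let pbprev := sumL (fun as' => joint al be pol bm1 i as' (firstn i bs)) (bseqs i) in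
    let pabprev := sumL (fun b => joint al be pol bm1 (S i) (u ++ [a]) (firstn i bs ++ [b])) [false; true] in
    let pb := sumL (fun as' => joint al be pol bm1 (S i) as' bs) (bseqs (S i)) in
    if Req_EM_T pab 0 then 0
    else pab * log2 (pab * pbprev / (pabprev * pb))) (bseqs (S i)) =
    sumL (fun s => Tn al be pol bm1 i u s a false + Tn al be pol bm1 i u s a true) (bseqs i)).
  { intros a. rewrite sumL_bseqsS. apply sumL_ext_in. intros s Hs. apply bseqs_length in Hs.
    assert (HTb : forall b, (let pab := joint al be pol bm1 (S i) (u ++ [a]) (s ++ [b]) in
    let pbprev := sumL (fun as' => joint al be pol bm1 i as' (firstn i (s ++ [b]))) (bseqs i) in
    let pabprev := sumL (fun b0 => joint al be pol bm1 (S i) (u ++ [a]) (firstn i (s ++ [b]) ++ [b0])) [false; true] in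
    let pb := sumL (fun as' => joint al be pol bm1 (S i) as' (s ++ [b])) (bseqs (S i)) in
    if Req_EM_T pab 0 then 0
    else pab * log2 (pab * pbprev / (pabprev * pb))) = Tn al be pol bm1 i u s a b).
    { intros b. cbv zeta. rewrite !firstn_snoc by auto. rewrite sum_bool.
      rewrite !joint_snoc by auto.
      assert (Hpb : sumL (fun as' => joint al be pol bm1 (S i) as' (s ++ [b])) (bseqs (S i)) =
                    Qf al be pol bm1 i s b).
      { rewrite sumL_bseqsS. apply sumL_ext_in. intros u' Hu2. apply bseqs_length in Hu2.
        rewrite !joint_snoc by auto. unfold Kf, wf. ring. }
      rewrite Hpb. fold (Psf al be pol bm1 i s). unfold Tn. cbv zeta.
      pose proof (bssc_sum al be a (prev_state bm1 i s)) as Hsum.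
      fold (wf al be bm1 i s a b).
      replace (joint al be pol bm1 i u s * (pol i u s a * bssc al be false a (prev_state bm1 i s)) +
        joint al be pol bm1 i u s * (pol i u s a * bssc al be true a (prev_state bm1 i s)))
        with (Kf al be pol bm1 i u s a) by (unfold Kf; transitivity (joint al be pol bm1 i u s * pol i u s a * (bssc al be false a (prev_state bm1 i s) + bssc al be true a (prev_state bm1 i s))); [rewrite Hsum; ring| ring]).
      replace (joint al be pol bm1 i u s * (pol i u s a * wf al be bm1 i s a b))
        with (Kf al be pol bm1 i u s a * wf al be bm1 i s a b) by (unfold Kf; ring).
      destruct (Req_EM_T _ 0) as [e|n]; [reflexivity|].
      f_equal. f_equal. field. split.
      - pose proof (Qf_ge al be pol bm1 i u s a b Hal Hbe Hp Hu').
        pose proof (Kf_nonneg al be pol bm1 i u s a Hal Hbe Hp). pose proof (wf_nonneg al be bm1 i s a b Hal Hbe).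
        assert (0 <= Kf al be pol bm1 i u s a * wf al be bm1 i s a b) by (apply Rmult_le_pos; auto). lra.
      - intro h. apply n. rewrite h. ring. }
    rewrite HTb, HTb. reflexivity. }
  rewrite HT, HT. reflexivity.
Qed.

Definition Gf al be pol bm1 i s b :=
  log2 (PTI al be b (prev_state bm1 i s) * Psf al be pol bm1 i s / Qf al be pol bm1 i s b).

Lemma ln3 x y z : 0 < x -> 0 < y -> 0 < z -> ln (x * y / z) = ln x + ln y - ln z.
Proof. intros. unfold Rdiv. rewrite ln_mult, ln_mult, ln_Rinv; try lra; auto.
  apply Rmult_lt_0_compat; auto. apply Rinv_0_lt_compat; auto. Qed.

Lemma PTI_pos al be b p : 0 < PTI al be b p.
Proof. pose proof (lam_bounds al be). unfold PTI. destruct (Bool.eqb b p); lra. Qed.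
Lemma PTI_sum al be p : PTI al be false p + PTI al be true p = 1.
Proof. unfold PTI. destruct p; simpl; ring. Qed.

Lemma Psf_ge al be pol bm1 i u s : 0 <= al <= 1 -> 0 <= be <= 1 -> valid_policy pol ->
  In u (bseqs i) -> joint al be pol bm1 i u s <= Psf al be pol bm1 i s.
Proof. intros. unfold Psf. apply (sumL_ge_term (fun u => joint al be pol bm1 i u s)); auto.
  intros. apply joint_nonneg; auto. Qed.

Lemma Tn_split al be pol bm1 i u s a b : 0 <= al <= 1 -> 0 <= be <= 1 -> valid_policy pol ->
  In u (bseqs i) ->
  Tn al be pol bm1 i u s a b = Kf al be pol bm1 i u s a * Dterm al be a (prev_state bm1 i s) b
     + Kf al be pol bm1 i u s a * wf al be bm1 i s a b * Gf al be pol bm1 i s b.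
Proof. intros Hal Hbe Hp Hu. unfold Tn, Dterm, Gf. fold (wf al be bm1 i s a b). cbv zeta.
  pose proof (Kf_nonneg al be pol bm1 i u s a Hal Hbe Hp) as HK.
  pose proof (wf_nonneg al be bm1 i s a b Hal Hbe) as Hw.
  pose proof (Qf_ge al be pol bm1 i u s a b Hal Hbe Hp Hu) as HQ.
  pose proof (Psf_ge al be pol bm1 i u s Hal Hbe Hp Hu) as HP.
  pose proof (PTI_pos al be b (prev_state bm1 i s)) as Hr.
  set (K := Kf al be pol bm1 i u s a) in *. set (w := wf al be bm1 i s a b) in *.
  set (Q := Qf al be pol bm1 i s b) in *. set (P := Psf al be pol bm1 i s) in *.
  set (r := PTI al be b (prev_state bm1 i s)) in *.
  destruct (Req_EM_T (K * w) 0) as [e|n].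
  - destruct (Req_EM_T w 0) as [e2|n2].
    + rewrite e2. ring.
    + assert (K = 0). { destruct (Rmult_integral _ _ e); auto. contradiction. }
      rewrite H. ring.
  - destruct (Req_EM_T w 0) as [e2|n2]. { exfalso. apply n. rewrite e2. ring. }
    assert (HKp : 0 < K). { destruct HK as [h|h]; auto. exfalso. apply n. rewrite <- h. ring. }
    assert (Hwp : 0 < w) by lra.
    assert (HQp : 0 < Q). { assert (0 < K * w) by (apply Rmult_lt_0_compat; auto). lra. }
    assert (HJ : 0 < joint al be pol bm1 i u s).
    { pose proof (joint_nonneg al be pol bm1 i u s Hal Hbe Hp) as hj. destruct hj as [h|h]; auto.
      exfalso. unfold K, Kf in HKp. rewrite <- h in HKp. lra. }
    assert (HPp : 0 < P) by lra.
    unfold log2. rewrite !ln3 by auto. field. apply Rgt_not_eq. apply ln2_pos. Qed.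

Definition Bsum al be pol bm1 i := sumL (fun s =>
  Qf al be pol bm1 i s false * Gf al be pol bm1 i s false +
  Qf al be pol bm1 i s true * Gf al be pol bm1 i s true) (bseqs i).

Lemma cmi_decomp al be pol bm1 i : 0 <= al <= 1 -> 0 <= be <= 1 -> al + be <> 1 -> valid_policy pol ->
  cmi al be pol bm1 i = cap_value al be + Bsum al be pol bm1 i.
Proof. intros Hal Hbe Hab Hp. rewrite cmi_Tn by auto.
  transitivity (sumL (fun u => sumL (fun s =>
     joint al be pol bm1 i u s * cap_value al be +
     (Gf al be pol bm1 i s false * (Kf al be pol bm1 i u s false * wf al be bm1 i s false false +
                                    Kf al be pol bm1 i u s true * wf al be bm1 i s true false) +
      Gf al be pol bm1 i s true * (Kf al be pol bm1 i u s false * wf al be bm1 i s false true +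
                                    Kf al be pol bm1 i u s true * wf al be bm1 i s true true))) (bseqs i)) (bseqs i)).
  { apply sumL_ext_in. intros u Hu. rewrite <- sumL_plus. apply sumL_ext_in. intros s Hs.
    rewrite !Tn_split by auto.
    pose proof (Dsum al be false (prev_state bm1 i s) Hab).
    pose proof (Dsum al be true (prev_state bm1 i s) Hab).
    destruct (Hp i u s) as [_ Hps].
    unfold Kf. 
    transitivity (joint al be pol bm1 i u s * pol i u s false * (Dterm al be false (prev_state bm1 i s) false + Dterm al be false (prev_state bm1 i s) true) + 
      joint al be pol bm1 i u s * pol i u s true * (Dterm al be true (prev_state bm1 i s) false + Dterm al be true (prev_state bm1 i s) true) +
     (Gf al be pol bm1 i s false * (joint al be pol bm1 i u s * pol i u s false * wf al be bm1 i s false false +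
                                    joint al be pol bm1 i u s * pol i u s true * wf al be bm1 i s true false) +
      Gf al be pol bm1 i s true * (joint al be pol bm1 i u s * pol i u s false * wf al be bm1 i s false true +
                                    joint al be pol bm1 i u s * pol i u s true * wf al be bm1 i s true true))); [ring|].
    rewrite H, H0. 
    transitivity (joint al be pol bm1 i u s * (pol i u s true + pol i u s false) * cap_value al be +
     (Gf al be pol bm1 i s false * (joint al be pol bm1 i u s * pol i u s false * wf al be bm1 i s false false +
                                    joint al be pol bm1 i u s * pol i u s true * wf al be bm1 i s true false) +
      Gf al be pol bm1 i s true * (joint al be pol bm1 i u s * pol i u s false * wf al be bm1 i s false true +
                                    joint al be pol bm1 i u s * pol i u s true * wf al be bm1 i s true true))); [ring|].
    rewrite Hps. ring. }
  transitivity (cap_value al be * sumL (fun u => sumL (fun s => joint al be pol bm1 i u s) (bseqs i)) (bseqs i) +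
    sumL (fun u => sumL (fun s =>
     (Gf al be pol bm1 i s false * (Kf al be pol bm1 i u s false * wf al be bm1 i s false false +
                                    Kf al be pol bm1 i u s true * wf al be bm1 i s true false) +
      Gf al be pol bm1 i s true * (Kf al be pol bm1 i u s false * wf al be bm1 i s false true +
                                    Kf al be pol bm1 i u s true * wf al be bm1 i s true true))) (bseqs i)) (bseqs i)).
  { rewrite <- sumL_scal. rewrite <- sumL_plus. apply sumL_ext_in. intros u _.
    rewrite <- sumL_scal. rewrite <- sumL_plus. apply sumL_ext_in. intros s _. ring. }
  rewrite joint_mass by auto. rewrite Rmult_1_r. f_equal. unfold Bsum. rewrite sumL_swap. apply sumL_ext_in. intros s _.
  rewrite sumL_plus, !sumL_scal. unfold Qf. ring. Qed.

Lemma QF_QT al be pol bm1 i s : valid_policy pol ->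
  Qf al be pol bm1 i s false + Qf al be pol bm1 i s true = Psf al be pol bm1 i s.
Proof. intros Hp. unfold Qf, Psf. rewrite <- sumL_plus. apply sumL_ext_in. intros u _.
  unfold Kf, wf. destruct (Hp i u s) as [_ H].
  pose proof (bssc_sum al be false (prev_state bm1 i s)). pose proof (bssc_sum al be true (prev_state bm1 i s)).
  transitivity (joint al be pol bm1 i u s * (pol i u s false * (bssc al be false false (prev_state bm1 i s) + bssc al be true false (prev_state bm1 i s))
     + pol i u s true * (bssc al be false true (prev_state bm1 i s) + bssc al be true true (prev_state bm1 i s)))); [ring|].
  rewrite H0, H1. rewrite !Rmult_1_r, (Rplus_comm (pol i u s false)), H. ring. Qed.

Lemma Qf_nonneg al be pol bm1 i s b : 0 <= al <= 1 -> 0 <= be <= 1 -> valid_policy pol ->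
  0 <= Qf al be pol bm1 i s b.
Proof. intros. unfold Qf. apply sumL_nonneg. intros u _.
  pose proof (Kf_nonneg al be pol bm1 i u s false H H0 H1). pose proof (Kf_nonneg al be pol bm1 i u s true H H0 H1).
  pose proof (wf_nonneg al be bm1 i s false b H H0). pose proof (wf_nonneg al be bm1 i s true b H H0).
  nra. Qed.

Lemma Bsum_le al be pol bm1 i : 0 <= al <= 1 -> 0 <= be <= 1 -> valid_policy pol ->
  Bsum al be pol bm1 i <= 0.
Proof. intros Hal Hbe Hp. unfold Bsum. rewrite <- (sumL_zero (bseqs i)). apply sumL_le_in. intros s _.
  pose proof (QF_QT al be pol bm1 i s Hp) as HS.
  pose proof (Qf_nonneg al be pol bm1 i s false Hal Hbe Hp).
  pose proof (Qf_nonneg al be pol bm1 i s true Hal Hbe Hp).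
  pose proof (PTI_sum al be (prev_state bm1 i s)) as Hr.
  pose proof (PTI_pos al be false (prev_state bm1 i s)). pose proof (PTI_pos al be true (prev_state bm1 i s)).
  assert (G : forall b, Qf al be pol bm1 i s b * ln (PTI al be b (prev_state bm1 i s) * Psf al be pol bm1 i s / Qf al be pol bm1 i s b)
     <= PTI al be b (prev_state bm1 i s) * Psf al be pol bm1 i s - Qf al be pol bm1 i s b).
  { intros b. apply gibbs. apply Qf_nonneg; auto. apply Rmult_le_pos. left; apply PTI_pos. lra.
    destruct (Req_dec (Qf al be pol bm1 i s b) 0) as [e|n]; [left; auto|right].
    apply Rmult_lt_0_compat. apply PTI_pos. destruct b; lra. }
  pose proof (G false). pose proof (G true). unfold Gf, log2. pose proof ln2_pos as L2.
  assert (E : Qf al be pol bm1 i s false * (ln (PTI al be false (prev_state bm1 i s) * Psf al be pol bm1 i s / Qf al be pol bm1 i s false) / ln 2) +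
Qf al be pol bm1 i s true * (ln (PTI al be true (prev_state bm1 i s) * Psf al be pol bm1 i s / Qf al be pol bm1 i s true) / ln 2)
 = (Qf al be pol bm1 i s false * ln (PTI al be false (prev_state bm1 i s) * Psf al be pol bm1 i s / Qf al be pol bm1 i s false) + Qf al be pol bm1 i s true * ln (PTI al be true (prev_state bm1 i s) * Psf al be pol bm1 i s / Qf al be pol bm1 i s true)) / ln 2) by (field; lra).
  rewrite E. pose proof (Rinv_0_lt_compat _ L2). unfold Rdiv at 1. 
  set (X := Qf al be pol bm1 i s false * ln (PTI al be false (prev_state bm1 i s) * Psf al be pol bm1 i s / Qf al be pol bm1 i s false) + Qf al be pol bm1 i s true * ln (PTI al be true (prev_state bm1 i s) * Psf al be pol bm1 i s / Qf al be pol bm1 i s true)).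
  assert (X <= 0). { unfold X. assert (PTI al be false (prev_state bm1 i s) * Psf al be pol bm1 i s + PTI al be true (prev_state bm1 i s) * Psf al be pol bm1 i s = Psf al be pol bm1 i s) by (rewrite <- Rmult_plus_distr_r, Hr; ring). lra. }
  nra. Qed.

Lemma Bsum_eq0 al be pol bm1 i :
  (forall s b, In s (bseqs i) -> Qf al be pol bm1 i s b = PTI al be b (prev_state bm1 i s) * Psf al be pol bm1 i s) ->
  Bsum al be pol bm1 i = 0.
Proof. intros H. unfold Bsum. rewrite <- (sumL_zero (bseqs i)). apply sumL_ext_in. intros s Hs.
  unfold Gf. rewrite <- !H by auto.
  assert (Z : forall x, x * log2 (x / x) = 0).
  { intros x. destruct (Req_dec x 0) as [->|n]; [ring|]. unfold Rdiv. rewrite Rinv_r by auto.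
    unfold log2. rewrite ln_1. unfold Rdiv. ring. }
  rewrite !Z. ring. Qed.

Definition pl (x : R) : R := if Req_EM_T x 0 then 0 else x * ln x.
Definition dl (r w : R) : R := pl w + pl (1 - w) - w * ln r - (1 - w) * ln (1 - r).

Lemma ln_lt_sub1 y : 0 < y -> y <> 1 -> ln y < y - 1.
Proof. intros H H1. assert (ln y <> 0). { intro e. apply H1. rewrite <- (exp_ln y) by auto. rewrite e. apply exp_0. }
  pose proof (exp_ineq1 (ln y) H0). rewrite exp_ln in H2 by auto. lra. Qed.

Lemma ln_le_mono x y : 0 < x -> x <= y -> ln x <= ln y.
Proof. intros H [h|h]. left. apply ln_increasing; auto. subst; lra. Qed.

Lemma pl_pos x : 0 < x -> pl x = x * ln x.
Proof. intros. unfold pl. destruct (Req_EM_T x 0); [lra|auto]. Qed.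
Lemma pl_0 : pl 0 = 0.
Proof. unfold pl. destruct (Req_EM_T 0 0); [auto|lra]. Qed.

Lemma kl_pos w1 w2 : 0 < w1 < 1 -> 0 <= w2 <= 1 -> w1 <> w2 ->
  0 < pl w2 + pl (1 - w2) - w2 * ln w1 - (1 - w2) * ln (1 - w1).
Proof. intros H1 H2 Hn. destruct (Req_dec w2 1) as [e|n1].
  - subst. replace (1 - 1) with 0 by ring. rewrite pl_0, pl_pos by lra. rewrite ln_1.
    assert (ln w1 < 0). { rewrite <- ln_1. apply ln_increasing; lra. } lra.
  - destruct (Req_dec w2 0) as [e0|n0].
    + subst. replace (1 - 0) with 1 by ring. rewrite pl_0, pl_pos by lra. rewrite ln_1.
      assert (ln (1 - w1) < 0). { rewrite <- ln_1. apply ln_increasing; lra. } lra.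
    + rewrite !pl_pos by lra.
      assert (A : ln (w1 / w2) < w1 / w2 - 1).
      { apply ln_lt_sub1. apply Rdiv_lt_0_compat; lra. intro h. apply Hn.
        assert (w1 = w1 / w2 * w2) by (field; lra). rewrite h in H. lra. }
      assert (B : ln ((1 - w1) / (1 - w2)) <= (1 - w1) / (1 - w2) - 1).
      { apply ln_le_sub1. apply Rdiv_lt_0_compat; lra. }
      unfold Rdiv in A, B. rewrite ln_mult, ln_Rinv in A by (try apply Rinv_0_lt_compat; lra).
      rewrite ln_mult, ln_Rinv in B by (try apply Rinv_0_lt_compat; lra).
      assert (A' : w2 * (ln w1 - ln w2) < w1 - w2).
      { replace (w1 - w2) with (w2 * (w1 * / w2 - 1)) by (field; lra). apply Rmult_lt_compat_l; lra. }
      assert (B' : (1 - w2) * (ln (1 - w1) - ln (1 - w2)) <= (1 - w1) - (1 - w2)).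
      { assert (Hw : 1 - w2 <> 0) by (intro; apply n1; lra).
        replace ((1 - w1) - (1 - w2)) with ((1 - w2) * ((1 - w1) * / (1 - w2) - 1)) by (field; exact Hw).
        apply Rmult_le_compat_l; lra. }
      lra. Qed.

Lemma dl_mono r w1 w2 : 0 < r < 1 -> r <= w1 -> w1 < w2 -> w2 <= 1 -> dl r w1 < dl r w2.
Proof. intros Hr H1 H12 H2.
  assert (K := kl_pos w1 w2 ltac:(lra) ltac:(lra) ltac:(lra)).
  assert (L1 : ln r <= ln w1) by (apply ln_le_mono; lra).
  assert (L2 : ln (1 - w1) <= ln (1 - r)) by (apply ln_le_mono; lra).
  unfold dl. rewrite (pl_pos w1) by lra. rewrite (pl_pos (1 - w1)) by lra.
  assert (0 <= (w2 - w1) * ((ln w1 - ln r) + (ln (1 - r) - ln (1 - w1)))) by (apply Rmult_le_pos; lra).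
  nra. Qed.

Lemma dl_sym r w : dl r w = dl (1 - r) (1 - w).
Proof. unfold dl. replace (1 - (1 - w)) with w by ring. replace (1 - (1 - r)) with r by ring. ring. Qed.

Lemma dl_mono' r w1 w2 : 0 < r < 1 -> 0 <= w2 -> w2 < w1 -> w1 <= r -> dl r w1 < dl r w2.
Proof. intros. rewrite (dl_sym r w1), (dl_sym r w2). apply dl_mono; lra. Qed.

Lemma plogp_pl x : plogp x = pl x / ln 2.
Proof. unfold plogp, pl, log2. destruct (Req_EM_T x 0); [unfold Rdiv; ring| unfold Rdiv; ring]. Qed.

Lemma Dsum_dl al be a p : Dterm al be a p false + Dterm al be a p true =
  (if Bool.eqb a p then dl (lambda_p al be) al else dl (lambda_p al be) (1 - be)) / ln 2.
Proof. rewrite !Dterm_eq. pose proof ln2_pos. unfold dl, bssc, PTI, log2. rewrite !plogp_pl.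
  destruct a, p; simpl; try (replace (1 - (1 - al)) with al by ring);
  try (replace (1 - (1 - be)) with be by ring); field; lra. Qed.

Lemma nu_bounds al be : 0 <= al <= 1 -> 0 <= be <= 1 -> al + be <> 1 -> 0 <= nu_p al be <= 1.
Proof. intros Hal Hbe Hab.
  assert (E : dl (lambda_p al be) al = dl (lambda_p al be) (1 - be)).
  { pose proof (Dsum al be false false Hab). pose proof (Dsum al be true false Hab).
    rewrite Dsum_dl in H, H0. simpl in H, H0. pose proof ln2_pos.
    apply (Rmult_eq_reg_r (/ ln 2)). unfold Rdiv in *. lra. apply Rinv_neq_0_compat; lra. }
  pose proof (lam_nu al be Hab) as HL. pose proof (lam_bounds al be) as Hl.
  set (l := lambda_p al be) in *. set (n := nu_p al be) in *.
  assert (Hd : al <> 1 - be) by lra.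
  split.
  - destruct (Rle_dec 0 n) as [h|h]; auto. exfalso.
    destruct (Rlt_dec al (1 - be)) as [h2|h2].
    + assert (l > 1 - be) by nra. pose proof (dl_mono' l (1 - be) al Hl ltac:(lra) ltac:(lra) ltac:(lra)). lra.
    + assert (al > 1 - be) by lra. assert (l < 1 - be) by nra.
      pose proof (dl_mono l (1 - be) al Hl ltac:(lra) ltac:(lra) ltac:(lra)). lra.
  - destruct (Rle_dec n 1) as [h|h]; auto. exfalso.
    destruct (Rlt_dec al (1 - be)) as [h2|h2].
    + assert (l < al) by nra. pose proof (dl_mono l al (1 - be) Hl ltac:(lra) ltac:(lra) ltac:(lra)). lra.
    + assert (al > 1 - be) by lra. assert (l > al) by nra.
      pose proof (dl_mono' l al (1 - be) Hl ltac:(lra) ltac:(lra) ltac:(lra)). lra.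
Qed.

Lemma Qcond al be pol bm1 i s b : al + be <> 1 ->
  (forall u a, pol i u s a = if Bool.eqb a (prev_state bm1 i s) then nu_p al be else 1 - nu_p al be) ->
  Qf al be pol bm1 i s b = PTI al be b (prev_state bm1 i s) * Psf al be pol bm1 i s.
Proof. intros Hab H. unfold Qf, Psf. rewrite <- sumL_scal. apply sumL_ext_in. intros u _.
  unfold Kf, wf. rewrite !H. pose proof (lam_nu al be Hab).
  unfold PTI, bssc. destruct (prev_state bm1 i s), b; simpl; rewrite H0; ring. Qed.

Lemma piTI_valid al be bm1 : 0 <= al <= 1 -> 0 <= be <= 1 -> al + be <> 1 -> valid_policy (piTI al be bm1).
Proof. intros Hal Hbe Hab i as_ bs. pose proof (nu_bounds al be Hal Hbe Hab). unfold piTI. split.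
  - intros a. destruct (Bool.eqb a _); lra.
  - destruct (prev_state bm1 i bs); simpl; ring. Qed.

Lemma cmi_le al be pol bm1 i : 0 <= al <= 1 -> 0 <= be <= 1 -> al + be <> 1 -> valid_policy pol ->
  cmi al be pol bm1 i <= cap_value al be.
Proof. intros. rewrite cmi_decomp by auto. pose proof (Bsum_le al be pol bm1 i H H0 H2). lra. Qed.

Lemma cmi_piTI al be bm1 i : 0 <= al <= 1 -> 0 <= be <= 1 -> al + be <> 1 ->
  cmi al be (piTI al be bm1) bm1 i = cap_value al be.
Proof. intros. rewrite cmi_decomp by (auto; apply piTI_valid; auto).
  rewrite Bsum_eq0. ring. intros s b _. apply Qcond; auto. Qed.

Lemma sum_le_const f c n : (forall i, f i <= c) -> sum_f_R0 f n <= INR (n + 1) * c.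
Proof. intros H. induction n as [|n IH].
  - change (sum_f_R0 f 0) with (f 0%nat). change (INR (0+1)) with 1. specialize (H 0%nat). lra.
  - change (sum_f_R0 f (S n)) with (sum_f_R0 f n + f (S n)).
    replace (S n + 1)%nat with (S (n + 1)) by lia. rewrite S_INR. specialize (H (S n)). lra. Qed.
Lemma sum_eq_const f c n : (forall i, f i = c) -> sum_f_R0 f n = INR (n + 1) * c.
Proof. intros H. induction n as [|n IH].
  - change (sum_f_R0 f 0) with (f 0%nat). change (INR (0+1)) with 1. rewrite H. ring.
  - change (sum_f_R0 f (S n)) with (sum_f_R0 f n + f (S n)).
    replace (S n + 1)%nat with (S (n + 1)) by lia. rewrite S_INR, IH, H. ring. Qed.

Definition pol0 (q : bool -> R) : policy := fun _ _ _ a => q a.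

Lemma mi0_cmi al be bm1 q : 0 <= al <= 1 -> 0 <= be <= 1 -> valid_dist q ->
  mi0 al be bm1 q = cmi al be (pol0 q) bm1 0.
Proof. intros Hal Hbe [Hq1 Hq2].
  assert (Hv : valid_policy (pol0 q)) by (intros i u s; unfold pol0; split; auto).
  rewrite cmi_Tn by auto. simpl bseqs. rewrite !sumL_cons, !sumL_nil.
  assert (M : forall a b, (if Req_EM_T (q a * bssc al be b a bm1) 0 then 0 else
     q a * bssc al be b a bm1 * log2 (q a * bssc al be b a bm1 /
       (q a * (q false * bssc al be b false bm1 + (q true * bssc al be b true bm1 + 0)))))
     = Tn al be (pol0 q) bm1 0 [] [] a b).
  { intros a b. unfold Tn, Psf, Qf, Kf, wf, pol0. simpl.
    replace (1 * q a) with (q a) by ring. replace (1 * q false) with (q false) by ring.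
    replace (1 * q true) with (q true) by ring.
    destruct (Req_EM_T (q a * bssc al be b a bm1) 0) as [e|n]; [reflexivity|].
    assert (0 <= q a * bssc al be b a bm1) by (apply Rmult_le_pos; auto; apply bssc_nonneg; auto).
    assert (HP : q a * bssc al be b a bm1 <= q false * bssc al be b false bm1 + q true * bssc al be b true bm1).
    { pose proof (Hq1 false). pose proof (Hq1 true). pose proof (bssc_nonneg al be b false bm1 Hal Hbe).
      pose proof (bssc_nonneg al be b true bm1 Hal Hbe). destruct a; nra. }
    assert (q a <> 0) by (intro h; apply n; rewrite h; ring).
    f_equal. f_equal. field. split; lra. }
  unfold mi0. cbn [sumL fold_right]. rewrite !M. ring. Qed.

Theorem mainTheorem9 (al be : R) (Hal : 0 <= al <= 1) (Hbe : 0 <= be <= 1)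
    (Hab : al + be <> 1) :
  (* (a) *)
  (forall (n : nat) (bm1 : bool),
     valid_policy (piTI al be bm1) /\
     (forall i bs, length bs = S i ->
        pout al be (piTI al be bm1) bm1 (S i) bs =
        PTI al be (nth i bs false) (prev_state bm1 i bs) *
        pout al be (piTI al be bm1) bm1 i (firstn i bs)) /\
     is_lub (DI_set al be bm1 n) (dirinfo al be (piTI al be bm1) bm1 n) /\
     dirinfo al be (piTI al be bm1) bm1 n = INR (n + 1) * cap_value al be /\
     (exists q, valid_dist q /\ mi0 al be bm1 q = cap_value al be) /\
     (forall q, valid_dist q -> mi0 al be bm1 q <= cap_value al be)) /\
  (* (b) *)
  (forall (bm1 : bool) (C : nat -> R),
     (forall n, is_lub (DI_set al be bm1 n) (C n)) ->
     Un_cv (fun n => C n / INR (n + 1)) (cap_value al be)).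
Proof.
  assert (DIeq : forall n bm1, dirinfo al be (piTI al be bm1) bm1 n = INR (n + 1) * cap_value al be).
  { intros. unfold dirinfo. apply sum_eq_const. intros; apply cmi_piTI; auto. }
  assert (LUB : forall n bm1, is_lub (DI_set al be bm1 n) (dirinfo al be (piTI al be bm1) bm1 n)).
  { intros n bm1. split.
    - intros x [pol [Hp ->]]. rewrite DIeq. unfold dirinfo. apply sum_le_const. intros; apply cmi_le; auto.
    - intros M HM. apply HM. exists (piTI al be bm1). split; auto. apply piTI_valid; auto. }
  split.
  - intros n bm1. split; [apply piTI_valid; auto|]. split.
    + intros i bs Hl. destruct (exists_last (l := bs)) as [s [b Hbs]].
      { intro h. subst. simpl in Hl. discriminate. }
      subst bs. rewrite length_app in Hl. simpl in Hl. assert (Hs : length s = i) by lia.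
      rewrite firstn_snoc by auto. rewrite prev_state_app by lia.
      rewrite app_nth2 by lia. rewrite Hs, Nat.sub_diag. simpl nth.
      assert (E1 : pout al be (piTI al be bm1) bm1 (S i) (s ++ [b]) = Qf al be (piTI al be bm1) bm1 i s b).
      { unfold pout. rewrite sumL_bseqsS. apply sumL_ext_in. intros u Hu. apply bseqs_length in Hu.
        rewrite !joint_snoc by auto. unfold Kf, wf. ring. }
      rewrite E1. rewrite Qcond by auto. reflexivity.
    + split; [apply LUB|]. split; [apply DIeq|]. split.
      * set (q := fun a => piTI al be bm1 0%nat [] [] a).
        assert (Hq : valid_dist q). { pose proof (piTI_valid al be bm1 Hal Hbe Hab 0%nat [] []) as [h1 h2]. split; auto. }
        exists q. split; auto. rewrite mi0_cmi by auto.
        rewrite cmi_decomp by (auto; intros i u s; unfold pol0; destruct Hq; split; auto).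
        rewrite Bsum_eq0. ring. intros s b _. apply Qcond; auto.
      * intros q Hq. rewrite mi0_cmi by auto. apply cmi_le; auto.
        intros i u s; unfold pol0; destruct Hq; split; auto.
  - intros bm1 C HC n_eps Heps. exists 0%nat. intros k _.
    assert (C k = INR (k + 1) * cap_value al be).
    { rewrite <- (DIeq k bm1). destruct (HC k) as [U1 L1]. destruct (LUB k bm1) as [U2 L2].
      apply Rle_antisym; [apply L1; auto | apply L2; auto]. }
    unfold R_dist. rewrite H. assert (0 < INR (k + 1)) by (apply lt_0_INR; lia).
    replace (INR (k + 1) * cap_value al be / INR (k + 1) - cap_value al be) with 0 by (field; lra).
    rewrite Rabs_R0. auto.
Qed.
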